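(* (1) For $N<N'$, $\pi_{N'}\circ\iota_{N,N'}=\pi_N$. (2) For all $N_1,N_2\ge0$, $\pi_{N_1+N_2}\circ\mathfrak m_{N_1,N_2}=\mathfrak m\circ(\pi_{N_1}\times\pi_{N_2})$, where $\mathfrak m:L^-\mathrm{GL}_K\times L^-\mathrm{GL}_K\to L^-\mathrm{GL}_K$ is the group multiplication.
   Context: $\mathcal M(N,K)=\mathrm{Rep}(N,K)/\!/\mathrm{GL}_N$, with $\mathrm{Rep}(N,K)$ the triples $(B,\psi,\overline\psi)$, $B\in\mathrm{Mat}_{N\times N}(\mathbb C)$, $\psi\in\mathrm{Mat}_{N\times K}$, $\overline\psi\in\mathrm{Mat}_{K\times N}$, and $g\cdot(B,\psi,\overline\psi)=(gBg^{-1},g\psi,\overline\psi g^{-1})$. $L^-\mathrm{GL}_K$ is the group (under multiplication of matrix power series) of series $1+\sum_{i\ge1}g_iz^{-i}$, $g_i\in\mathfrak{gl}_K$. $\pi_N(B,\psi,\overline\psi)=1+\overline\psi(z-\widetilde B/2)^{-1}\psi$, $\widetilde B=B+\psi\overline\psi$. $\iota_{N,N'}(B,\psi,\overline\psi)=(\mathrm{diag}(B,0),\binom{\psi}{0},(\overline\psi\ 0))$. $\mathfrak m_{N_1,N_2}$ sends $(B^{(1)},\psi^{(1)},\overline\psi^{(1)})\times(B^{(2)},\psi^{(2)},\overline\psi^{(2)})$ to $\left(\begin{bmatrix}B^{(1)}&\psi^{(1)}\overline\psi^{(2)}\\-\psi^{(2)}\overline\psi^{(1)}&B^{(2)}\end{bmatrix},\begin{bmatrix}\psi^{(1)}\\\psi^{(2)}\end{bmatrix},\begin{bmatrix}\overline\psi^{(1)}&\overline\psi^{(2)}\end{bmatrix}\right)$.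 *)

(* Defs.v *)
From HB Require Import structures.
From mathcomp Require Import all_boot all_order all_algebra.
From mathcomp Require Import reals.
From mathcomp Require Import complex.
Set Implicit Arguments. Unset Strict Implicit. Unset Printing Implicit Defensive.
Import Order.TTheory GRing.Theory Num.Theory.
Local Open Scope ring_scope.

Section Defs.
Variable R : realType.
Local Notation C := R[i].

Record Rep (N K : nat) := mkRep {
  repB : 'M[C]_N;
  repPsi : 'M[C]_(N, K);
  repPsibar : 'M[C]_(K, N) }.

(* Elements of L^- GL_K: formal series 1 + sum_{i>=1} g_i z^{-i}, encoded by
   the coefficient sequence i |-> g_i (with g_0 = 1). *)
Definition series (K : nat) := nat -> 'M[C]_K.
Definition in_LmGL K (g : series K) : Prop := g 0%N = 1%:M.

Definition LmGL_mul K (g h : series K) : series K :=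
  fun n => \sum_(i < n.+1) g i *m h (n - i)%N.

(* pi_N(B,psi,psibar) = 1 + psibar (z - Btilde/2)^{-1} psi,
   Btilde = B + psi psibar, expanded in z^{-1}:
   (z - A)^{-1} = sum_{i>=0} A^i z^{-i-1}. *)
Definition Btilde N K (x : Rep N K) : 'M[C]_N := repB x + repPsi x *m repPsibar x.
Definition piN N K (x : Rep N K) : series K :=
  fun n => match n with
           | 0%N => 1%:M
           | m.+1 => repPsibar x *m ((2%:R)^-1 *: Btilde x) ^+ m *m repPsi x
           end.

Definition iotaN N d K (x : Rep N K) : Rep (N + d) K :=
  mkRep (block_mx (repB x) 0 0 (0 : 'M[C]_d))
        (col_mx (repPsi x) (0 : 'M[C]_(d, K)))
        (row_mx (repPsibar x) (0 : 'M[C]_(K, d))).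

Definition mN N1 N2 K (x1 : Rep N1 K) (x2 : Rep N2 K) : Rep (N1 + N2) K :=
  mkRep (block_mx (repB x1) (repPsi x1 *m repPsibar x2)
                  (- (repPsi x2 *m repPsibar x1)) (repB x2))
        (col_mx (repPsi x1) (repPsi x2))
        (row_mx (repPsibar x1) (repPsibar x2)).
End Defs.

(* Main.v *)
Require Import Defs.
From HB Require Import structures.
From mathcomp Require Import all_boot all_order all_algebra.
From mathcomp Require Import reals.
From mathcomp Require Import complex.
From Stdlib Require FunctionalExtensionality.
Import Order.TTheory GRing.Theory Num.Theory.
Local Open Scope ring_scope.

Lemma pow_block (F : fieldType) n1 n2 (A : 'M[F]_n1) (B : 'M[F]_(n1,n2)) (D : 'M[F]_n2) m :
  (block_mx A B 0 D) ^+ m =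
  block_mx (A ^+ m) (\sum_(i < m) A ^+ i *m B *m D ^+ (m - i.+1)) 0 (D ^+ m).
Proof.
elim: m => [|m IH].
  by rewrite !expr0 big_ord0 -scalar_mx_block.
rewrite exprSr IH !exprSr.
rewrite -[_ * _]/(mulmx _ _) mulmx_block.
rewrite !mulmx0 !mul0mx !addr0 !add0r.
congr block_mx.
rewrite big_ord_recr /= subnn expr0 mulmx1 addrC; congr (_ + _).
rewrite mulmx_suml; apply: eq_bigr => i _.
by rewrite -mulmxA -[_ *m D]/(_ * D) -exprSr subSn.
Qed.

Lemma mul0mx' (F : pzSemiRingType) m n p (A : 'M[F]_(n, p)) : (0 : 'M[F]_(m, n)) *m A = 0.
Proof. exact: mul0mx. Qed.

Theorem mainTheorem14 (R : realType) (K : nat) :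
  (forall (N d : nat), (0 < d)%N ->
     forall x : Rep R N K, piN (iotaN d x) = piN x) /\
  (forall (N1 N2 : nat) (x1 : Rep R N1 K) (x2 : Rep R N2 K),
     piN (mN x1 x2) = LmGL_mul (piN x1) (piN x2)).
Proof.
split.
  move=> N d _ x; apply: FunctionalExtensionality.functional_extensionality => -[|m] //=.
  rewrite /Btilde /= mul_col_row add_block_mx.
  rewrite !mulmx0 !mul0mx !addr0.
  rewrite scale_block_mx !scaler0 pow_block.
  rewrite mul_row_block mul_row_col mulmx0 addr0 mul0mx' addr0.
  by rewrite mulmx0 addr0.
move=> N1 N2 x1 x2; apply: FunctionalExtensionality.functional_extensionality => -[|m].
  by rewrite /LmGL_mul /= big_ord1 mul1mx.
rewrite /LmGL_mul /= /Btilde /= mul_col_row add_block_mx addNr.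
rewrite scale_block_mx scaler0.
have h2 : (2%:R : R[i]) != 0 by rewrite pnatr_eq0.
have -> : (2%:R : R[i])^-1 *: (repPsi x1 *m repPsibar x2 + repPsi x1 *m repPsibar x2)
   = repPsi x1 *m repPsibar x2.
  by rewrite -[X in X + X]scale1r -scalerDl scalerA -natr1 /= mulVf ?scale1r // natr1.
rewrite pow_block.
set A1 := 2^-1 *: _; set A2 := 2^-1 *: _.
rewrite mul_row_block mulmx0 addr0 mul_row_col.
rewrite big_ord_recl big_ord_recr /=.
rewrite /Btilde -/A1 -/A2 mul1mx !add0n /bump /= !add1n subnn /= mulmx1.
rewrite mulmxDl mulmx_sumr mulmx_suml.
rewrite addrCA [RHS]addrC -addrA; congr (_ + _).
apply: eq_bigr => i _.
rewrite add0n add1n subSn //= -/A2 !mulmxA //.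
Qed.
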